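(* Let $\mathcal D=U(-1,1)$ and, for $m\ge 1$, let $\mathcal D_m$ denote the distribution of the sum of $m$ i.i.d. samples from $\mathcal D$. Let $k\ge 2$ and let $Z_2,\dots,Z_k$ be independent random variables with $Z_i\sim\mathcal D_{m(i)}$ for positive integers $m(i)$, and let $X\sim\mathcal D$ be independent of them. Then $$\mathbb P\big(0\ge \max(Z_2,\dots,Z_k)\big)\le \mathbb P\big(X\ge\max(Z_2,\dots,Z_k)\big).$$ *)

(* Defs.v *)
From HB Require Import structures.
From mathcomp Require Import all_boot all_order all_algebra.
From mathcomp Require Import all_classical all_reals all_analysis.
Set Implicit Arguments. Unset Strict Implicit. Unset Printing Implicit Defensive.
Import Order.TTheory GRing.Theory Num.Theory.
Local Open Scope classical_set_scope.
Local Open Scope ring_scope.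

Lemma m1_lt_1 (R : realType) : (-1 : R) < 1.
Proof. by rewrite (@lt_trans _ _ 0) ?ltrN10 ?ltr01. Qed.

Definition unifD (R : realType) := uniform_prob (m1_lt_1 R).

(* Iterated convolution: Dsum_aux m A s = P(s + U_1 + ... + U_m \in A)
   for U_1, ..., U_m i.i.d. ~ D (computed by iterated integration). *)
Fixpoint Dsum_aux (R : realType) (m : nat) (A : set R) (s : R) : \bar R :=
  match m with
  | 0 => (\1_A s)%:E
  | m'.+1 => (\int[@unifD R]_x @Dsum_aux R m' A (s + x))%E
  end.

Definition Dsum (R : realType) (m : nat) (A : set R) : \bar R := Dsum_aux m A 0.

Definition has_law d (T : measurableType d) (R : realType) (P : probability T R)
  (Y : T -> R) (mu : set R -> \bar R) : Prop :=
  forall A : set R, measurable A -> P (Y @^-1` A) = mu A.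

Definition mutually_independent d (T : measurableType d) (R : realType)
  (P : probability T R) (I : seq nat) (Y : nat -> T -> R) : Prop :=
  forall B : nat -> set R, (forall i, measurable (B i)) ->
    P (\bigcap_(i in [set` I]) (Y i @^-1` B i)) = (\prod_(i <- I) P (Y i @^-1` B i))%E.

(* Main.v *)
Require Import Defs.
From HB Require Import structures.
From mathcomp Require Import all_boot all_order all_algebra.
From mathcomp Require Import all_classical all_reals all_analysis.
From mathcomp Require Import measurable_realfun.
From mathcomp Require Import ring lra zify.
Import Order.TTheory GRing.Theory Num.Theory.
Local Open Scope classical_set_scope.
Local Open Scope ring_scope.


Section S.
Variable R : realType.

Lemma Dsum_aux_ge0 m (A : set R) s : (0 <= @Dsum_aux R m A s)%E.
Proof.
elim: m s => [|m IH] s /=; first by rewrite lee_fin indicE; case: (_ \in _).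
by apply: integral_ge0 => x _.
Qed.

Lemma measurable_Dsum_aux m (A : set R) : measurable A ->
  measurable_fun setT (@Dsum_aux R m A).
Proof.
move=> mA; elim: m => [|m IH] /=.
  by apply/measurable_EFinP; exact: measurable_indic.
have H := (@measurable_fun_fubini_tonelli_F _ _ _ _ R (@unifD R)
  (fun p : R * R => Dsum_aux m A (p.1 + p.2))).
apply: H.
  apply: measurableT_comp => //; apply: measurable_funD => //.
by move=> p; exact: Dsum_aux_ge0.
Qed.
End S.

Section S2.
Variable R : realType.
Local Open Scope ereal_scope.

Lemma opp_itv11 : (-%R : R -> measurableTypeR R) @^-1` `[(-1)%R, 1%R] = `[(-1)%R, 1%R]%classic.
Proof.
apply/seteqP; split => x /=; rewrite !in_itv/= => /andP[h1 h2];
  apply/andP; split; lra.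
Qed.

Lemma leb_reflect11 (f : R -> \bar R) : measurable_fun [set: R] f -> (forall r, 0 <= f r) ->
  \int[lebesgue_measure]_(x in `[(-1)%R, 1%R]) f (- x)%R =
  \int[lebesgue_measure]_(x in `[(-1)%R, 1%R]) f x.
Proof.
move=> mf f0.
rewrite -[in LHS]opp_itv11.
rewrite -ge0_integral_pushforward//=; last exact: measurable_funS mf.
apply: eq_measure_integral => //= A mA AS. exact: lebesgue_measureN.
Qed.

Lemma unif_reflect (f : R -> \bar R) : measurable_fun [set: R] f -> (forall r, 0 <= f r) ->
  \int[@unifD R]_x f (- x)%R = \int[@unifD R]_x f x.
Proof.
move=> mf f0.
rewrite /unifD integral_uniform//; last first.
  by apply: measurableT_comp => //; exact: oppr_measurable.
rewrite integral_uniform//; congr (_ * _).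
exact: leb_reflect11.
Qed.

Lemma unif_set1 (c : R) : @unifD R [set c] = 0.
Proof.
rewrite /unifD /uniform_prob. exact: integral_set1.
Qed.

Lemma Dsum_aux_set1 m (c s : R) : @Dsum_aux R m.+1 [set c] s = 0.
Proof.
elim: m s => [|m IH] s /=.
  transitivity (\int[@unifD R]_x (\1_[set (c - s)%R] x)%:E).
    apply: eq_integral => x _; rewrite !indicE.
    have -> : ((s + x)%R \in [set c]) = (x \in [set (c - s)%R]) => //.
    apply/idP/idP => /set_mem /= H; apply/mem_set => /=.
      by rewrite -H addrC addKr.
    by rewrite H addrC subrK.
  by rewrite integral_indic//= setIT; exact: unif_set1.
transitivity (\int[@unifD R]_x (cst 0 x : \bar R)).
  by apply: eq_integral => x _; exact: IH.
by rewrite integral0.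
Qed.

Lemma Dsum_aux_sym m (A : set R) s : measurable A ->
  @Dsum_aux R m A s = @Dsum_aux R m (-%R @^-1` A) (- s)%R.
Proof.
move=> mA.
have mA' : measurable (-%R @^-1` A : set R).
  have := (@oppr_measurable R setT) measurableT A mA; by rewrite setTI.
elim: m s => [|m IH] s /=.
  rewrite !indicE /=; congr ((_ : R)%:E).
  have -> : ((- s)%R \in (-%R @^-1` A : set R)) = (s \in A) => //.
  apply/idP/idP => /set_mem /= H; apply/mem_set => //=.
    by rewrite -(opprK s).
  by rewrite opprK.
transitivity (\int[@unifD R]_x (fun y => Dsum_aux m (-%R @^-1` A) (- s + y)%R) (- x)%R).
  by apply: eq_integral => x _; rewrite IH /= opprD.
apply: unif_reflect; last by move=> r; exact: Dsum_aux_ge0.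
apply: measurableT_comp; first exact: measurable_Dsum_aux.
exact: measurable_funD.
Qed.
End S2.
Arguments Dsum_aux_sym {R} m A s.



Lemma pair_ineq (R : realType) (s : seq nat) (a b : nat -> R) :
  (forall i, i \in s -> [/\ 2^-1 <= a i, a i <= 1, 0 <= b i, b i <= 2^-1 & 1 <= a i + b i]) ->
  [/\ 2 * \prod_(i <- s) (2^-1 : R) <= \prod_(i <- s) a i + \prod_(i <- s) b i,
      \prod_(i <- s) b i <= \prod_(i <- s) a i & 0 <= \prod_(i <- s) b i].
Proof.
elim: s => [|x s IH] H.
  by rewrite !big_nil; split => //; lra.
have [h1 h2 h3] : _ := IH (fun i hi => H i ltac:(by rewrite in_cons hi orbT)).
have [a1 a2 b1 b2 ab] := H x (mem_head _ _).
rewrite !big_cons.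
set Pa := \prod_(i <- s) a i in h1 h2 *.
set Qb := \prod_(i <- s) b i in h1 h2 h3 *.
set W := \prod_(i <- s) (2^-1 : R) in h1 *.
have e1 : 0 <= (a x - 2^-1) * (Pa - Qb) by apply: mulr_ge0; lra.
have e2 : 0 <= (a x + b x - 1) * Qb by apply: mulr_ge0; lra.
split.
- nra.
- by apply: ler_pM => //; lra.
- exact: mulr_ge0.
Qed.

Section Main.
Variables (R : realType) (d : measure_display) (T : measurableType d)
  (P : probability T R) (k : nat) (m : nat -> nat) (Z : nat -> T -> R) (X : T -> R).
Hypothesis hk : (2 <= k)%N.
Hypothesis mX : measurable_fun setT X.
Hypothesis mZ : forall i, (2 <= i <= k)%N -> measurable_fun setT (Z i).
Hypothesis ind : mutually_independent P (iota 1 k) (fun i => if i == 1%N then X else Z i).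

Definition Zle (c : R) := [set t | forall i, (2 <= i <= k)%N -> Z i t <= c].
Definition Ev (I : set R) (c : R) := X @^-1` I `&` Zle c.

Lemma PfinE (A : set T) : measurable A -> P A = (fine (P A))%:E.
Proof.
move=> mA; rewrite fineK // ge0_fin_numE ?measure_ge0 //.
by rewrite (le_lt_trans (probability_le1 _ mA)) ?ltry.
Qed.

Lemma mpreZ i (A : set R) : (2 <= i <= k)%N -> measurable A -> measurable (Z i @^-1` A).
Proof. by move=> hi mA; have := mZ i hi measurableT _ mA; rewrite setTI. Qed.

Lemma mpreX (A : set R) : measurable A -> measurable (X @^-1` A).
Proof. by move=> mA; have := mX measurableT _ mA; rewrite setTI. Qed.

Lemma mZle c : measurable (Zle c).
Proof.
rewrite (_ : Zle c = \bigcap_(i in [set i | (2 <= i <= k)%N]) (Z i @^-1` `]-oo, c])).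
  by apply: bigcap_measurableType => i hi; apply: mpreZ.
apply/seteqP; split => t /=.
  by move=> H i hi /=; rewrite in_itv /= H.
by move=> H i hi; have := H i hi; rewrite /= in_itv.
Qed.

Lemma mEv I c : measurable I -> measurable (Ev I c).
Proof. by move=> mI; apply: measurableI; [exact: mpreX | exact: mZle]. Qed.

Lemma Ev_indep I c : measurable I ->
  P (Ev I c) = (P (X @^-1` I) * \prod_(i <- iota 2 k.-1) P (Z i @^-1` `]-oo, c]))%E.
Proof.
move=> mI.
have mB : forall i, measurable (if i == 1%N then I else `]-oo, c]%classic).
  by move=> i; case: ifP.
have := ind _ mB.
have -> : iota 1 k = 1%N :: iota 2 k.-1 by case: k hk => [|[|k']].
have E : Ev I c = \bigcap_(i in [set` 1%N :: iota 2 k.-1])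
   ((if i == 1%N then X else Z i) @^-1` (if i == 1%N then I else `]-oo, c]%classic)).
  apply/seteqP; split => t.
  - case=> XI Zc i /= hi; move: hi; rewrite in_cons mem_iota => /orP[/eqP -> //|hi].
    have hi1 : (i == 1%N) = false by apply/eqP => h; rewrite h in hi.
    rewrite hi1 /= in_itv /=; apply: Zc; move: hi; case: (k) hk => // k' _; lia.
  - move=> H; split.
      by have := H 1%N; rewrite /=; apply; rewrite in_cons eqxx.
    move=> i hi; have := H i; rewrite (_ : (i == 1%N) = false); last first.
      by apply/eqP => h; rewrite h in hi.
    rewrite /= in_itv /=; apply; rewrite in_cons mem_iota; apply/orP; right.
    move: hi; case: (k) hk => // k' _; lia.
rewrite E big_cons eqxx => ->.
congr (_ * _)%E.
apply: eq_big_seq => i; rewrite mem_iota => hi.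
have hi1 : (i == 1%N) = false by apply/eqP => h; rewrite h in hi.
by rewrite hi1.
Qed.

Hypothesis hm : forall i, (2 <= i <= k)%N -> (0 < m i)%N.
Hypothesis lawZ : forall i, (2 <= i <= k)%N -> has_law P (Z i) (@Dsum R (m i)).

Lemma mopp (A : set R) : measurable A -> measurable (-%R @^-1` A : set R).
Proof. by move=> mA; have := (@oppr_measurable R setT) measurableT A mA; rewrite setTI. Qed.

Lemma Zsym i (A : set R) : (2 <= i <= k)%N -> measurable A ->
  P (Z i @^-1` A) = P (Z i @^-1` (-%R @^-1` A)).
Proof.
move=> hi mA; rewrite !lawZ // ?mopp // /Dsum.
by have := Dsum_aux_sym (m i) A 0 mA; rewrite oppr0.
exact: mopp.
Qed.

Lemma Zatom i (c : R) : (2 <= i <= k)%N -> P (Z i @^-1` [set c]) = 0%E.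
Proof.
move=> hi; rewrite lawZ // /Dsum.
have := hm i hi; case: (m i) => // n _; exact: Dsum_aux_set1.
Qed.

Lemma Zsplit i (c : R) : (2 <= i <= k)%N ->
  (P (Z i @^-1` `]-oo, c]) + P (Z i @^-1` `]c, +oo[))%E = 1%E.
Proof.
move=> hi; rewrite -measureU; first last.
- apply/seteqP; split => t //=; rewrite !in_itv /= => -[h1 h2]; lra.
- by apply: mpreZ.
- by apply: mpreZ.
rewrite -preimage_setU (_ : (`]-oo, c] `|` `]c, +oo[)%classic = setT).
  by rewrite preimage_setT; exact: probability_setT.
apply/seteqP; split => x //= _; rewrite !in_itv /=.
by case: (leP x c) => h; [left|right].
Qed.

Definition q i (A : set R) := fine (P (Z i @^-1` A)).

Lemma qE i (A : set R) : (2 <= i <= k)%N -> measurable A -> P (Z i @^-1` A) = (q i A)%:E.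
Proof. by move=> hi mA; rewrite /q -PfinE //; apply: mpreZ. Qed.

Lemma q_ge0 i A : (2 <= i <= k)%N -> measurable A -> 0 <= q i A.
Proof. by move=> hi mA; rewrite -lee_fin -qE //. Qed.

Lemma q_mono i (A B : set R) : (2 <= i <= k)%N -> measurable A -> measurable B ->
  A `<=` B -> q i A <= q i B.
Proof.
move=> hi mA mB AB; rewrite -lee_fin -!qE //; apply: le_measure; rewrite ?inE; try exact: mpreZ.
by move=> t /=; apply: AB.
Qed.

Lemma q_split i c : (2 <= i <= k)%N -> q i `]-oo, c] + q i `]c, +oo[ = 1.
Proof. by move=> hi; have := Zsplit i c hi; rewrite !qE // -EFinD => -[]. Qed.

Lemma q_sym i A : (2 <= i <= k)%N -> measurable A -> q i A = q i (-%R @^-1` A).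
Proof. by move=> hi mA; rewrite /q Zsym. Qed.

Lemma q_atom i c : (2 <= i <= k)%N -> q i [set c] = 0.
Proof. by move=> hi; rewrite /q Zatom. Qed.

Lemma q_U i (A B : set R) : (2 <= i <= k)%N -> measurable A -> measurable B ->
  A `&` B = set0 -> q i (A `|` B) = q i A + q i B.
Proof.
move=> hi mA mB AB.
have : P (Z i @^-1` (A `|` B)) = (P (Z i @^-1` A) + P (Z i @^-1` B))%E.
  rewrite preimage_setU measureU //; try exact: mpreZ.
  by rewrite -preimage_setI AB preimage_set0.
by rewrite !qE //; try exact: measurableU; rewrite -EFinD => -[].
Qed.

Definition g i c := q i `]-oo, c].

Lemma g_ge0 i c : (2 <= i <= k)%N -> 0 <= g i c.
Proof. by move=> hi; apply: q_ge0. Qed.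

Lemma g_mono i c c' : (2 <= i <= k)%N -> c <= c' -> g i c <= g i c'.
Proof.
move=> hi cc; apply: q_mono => // x /=; rewrite !in_itv /= => h; lra.
Qed.

Lemma g_sum i c : (2 <= i <= k)%N -> 1 <= g i c + g i (- c).
Proof.
move=> hi; rewrite -(q_split i c hi) /g lerD2l.
rewrite q_sym //; apply: q_mono => //; first exact: mopp.
by move=> x /=; rewrite !in_itv /= => h; lra.
Qed.

Lemma g_half i : (2 <= i <= k)%N -> g i 0 = 2^-1.
Proof.
move=> hi.
have h1 := q_split i 0 hi.
have h2 : g i 0 = q i `]-oo, 0[.
  rewrite /g (_ : `]-oo, 0] = `]-oo, 0[ `|` [set 0])%classic; last first.
    apply/seteqP; split => x /=; rewrite !in_itv /=.
      by rewrite le_eqVlt => /orP[/eqP ->|->]; [right|left].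
    by case=> [h|->] //; apply: ltW.
  by rewrite q_U // ?q_atom ?addr0 //; apply/seteqP; split => x //= []; rewrite in_itv /= => h hx; by rewrite hx ltxx in h.
have h3 : q i `]-oo, 0[ = q i `]0, +oo[.
  rewrite q_sym //; congr (q i _); apply/seteqP; split => x /=; rewrite !in_itv /= => h; lra.
rewrite /g in h2; rewrite /g; move: h1; rewrite -h3 -h2 => h1.
by rewrite (_ : 2^-1 = 1 / 2) //; lra.
Qed.

Lemma g_le1 i c : (2 <= i <= k)%N -> g i c <= 1.
Proof.
move=> hi; rewrite -(q_split i c hi) /g lerDl; apply: q_ge0 => //.
Qed.

Definition H c := \prod_(i <- iota 2 k.-1) g i c.

Lemma H0E : H 0 = \prod_(i <- iota 2 k.-1) (2^-1 : R).
Proof.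
apply: eq_big_seq => i; rewrite mem_iota => hi; apply: g_half.
by move: hi; case: (k) hk => // k' _; lia.
Qed.

Lemma H_pair t : 0 <= t -> 2 * H 0 <= H t + H (- t).
Proof.
move=> t0; rewrite H0E.
have [] := @pair_ineq R (iota 2 k.-1) (g ^~ t) (g ^~ (- t)).
  move=> i; rewrite mem_iota => hi.
  have hi' : (2 <= i <= k)%N by move: hi; case: (k) hk => // k' _; lia.
  split.
  - by rewrite -(g_half i hi'); apply: g_mono.
  - exact: g_le1.
  - exact: g_ge0.
  - by rewrite -(g_half i hi'); apply: g_mono => //; lra.
  - exact: g_sum.
by [].
Qed.

Lemma H_ge0 c : 0 <= H c.
Proof.
rewrite /H big_seq; apply: prodr_ge0 => i; rewrite mem_iota => hi; apply: g_ge0.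
by move: hi; case: (k) hk => // k' _; lia.
Qed.

Lemma H0_le1 : H 0 <= 1.
Proof.
rewrite H0E; apply: prodr_ile1 => i _; apply/andP; split; lra.
Qed.

Lemma prodP c : (\prod_(i <- iota 2 k.-1) P (Z i @^-1` `]-oo, c]))%E = (H c)%:E.
Proof.
rewrite /H -prodEFin; apply: eq_big_seq => i; rewrite mem_iota => hi.
by rewrite qE //; move: hi; case: (k) hk => // k' _; lia.
Qed.

Hypothesis lawX : has_law P X (@unifD R).

Lemma PX_itv a b : -1 <= a -> a <= b -> b <= 1 -> P (X @^-1` `[a, b[) = ((b - a) / 2)%:E.
Proof.
move=> a1 ab b1; rewrite lawX //.
rewrite /unifD /uniform_prob.
rewrite (eq_integral (fun=> (2^-1 : R)%:E)); last first.
  move=> x; rewrite inE /= in_itv /= => /andP[h1 h2]; rewrite /uniform_pdf.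
  rewrite ifT; last by apply/andP; split; lra.
  by rewrite opprK.
rewrite integral_cst //= lebesgue_measure_itv /= lte_fin.
case: ifP => h.
  by rewrite -EFinD -EFinM; congr (_%:E); rewrite mulrC.
have -> : b = a by apply/eqP; rewrite eq_le ab /= leNgt h.
by rewrite mule0 subrr mul0r.
Qed.

Definition Aset := [set t | forall i, (2 <= i <= k)%N -> Z i t <= X t].

Lemma mAset : measurable Aset.
Proof.
rewrite (_ : Aset = \bigcap_(i in [set i | (2 <= i <= k)%N]) [set t | Z i t <= X t]).
  apply: bigcap_measurableType => i hi.
  by have := measurable_fun_le measurableT (mZ i hi) mX; rewrite setTI.
by apply/seteqP; split => t /= H i hi; apply: H.
Qed.

Definition w (N j : nat) : R := j%:R / N%:R.

Lemma w_lt N i j : (0 < N)%N -> (w N i < w N j) = (i < j)%N.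
Proof. by move=> N0; rewrite /w ltr_pM2r ?invr_gt0 ?ltr0n // ltr_nat. Qed.

Lemma w_ge0 N j : 0 <= w N j.
Proof. by rewrite /w divr_ge0. Qed.

Lemma w_le1 N j : (0 < N)%N -> (j <= N)%N -> w N j <= 1.
Proof. by move=> N0 jN; rewrite /w ler_pdivrMr ?ltr0n // mul1r ler_nat. Qed.

Lemma w_diff N j : (0 < N)%N -> w N j.+1 - w N j = N%:R^-1.
Proof.
move=> N0; rewrite /w -mulrBl -natrB // subSnn mul1r //.
Qed.

Definition Ep N j := Ev `[w N j, w N j.+1[ (w N j).
Definition En N j := Ev `[- w N j.+1, - w N j[ (- w N j.+1).
Definition E N j := Ep N j `|` En N j.

Lemma PEp N j : (j < N)%N -> P (Ep N j) = ((2 * N%:R)^-1 * H (w N j))%:E.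
Proof.
move=> jN; have N0 : (0 < N)%N by lia.
rewrite /Ep Ev_indep // PX_itv; last first.
- by apply: w_le1.
- by rewrite ler_wpM2r ?invr_ge0 ?ler0n // ler_nat.
- by have := w_ge0 N j; lra.
by rewrite prodP -EFinM w_diff //; congr (_%:E); rewrite invfM; ring.
Qed.

Lemma PEn N j : (j < N)%N -> P (En N j) = ((2 * N%:R)^-1 * H (- w N j.+1))%:E.
Proof.
move=> jN; have N0 : (0 < N)%N by lia.
rewrite /En Ev_indep // PX_itv; first last.
- by have := w_ge0 N j; lra.
- by rewrite lerN2 ler_wpM2r ?invr_ge0 ?ler0n // ler_nat.
- by have := @w_le1 N j.+1 N0 jN; have := w_ge0 N j.+1; lra.
by rewrite prodP -EFinM opprK addrC w_diff //; congr (_%:E); rewrite invfM; ring.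
Qed.

Lemma mE N j : measurable (E N j).
Proof. by apply: measurableU; apply: mEv. Qed.

Lemma PE N j : (j < N)%N -> P (E N j) = ((2 * N%:R)^-1 * (H (w N j) + H (- w N j.+1)))%:E.
Proof.
move=> jN; rewrite /E measureU; first last.
- apply/seteqP; split => t //= [[Ht _] [Ht' _]]; move: Ht Ht'; rewrite /= !in_itv /= => /andP[h1 h2] /andP[h3 h4].
  have := w_ge0 N j; lra.
- exact: mEv.
- exact: mEv.
by rewrite mulrDr EFinD -(PEp N j jN) -(PEn N j jN).
Qed.

Lemma Etriv N : (0 < N)%N -> trivIset [set: 'I_N] (fun j => E N j).
Proof.
move=> N0 i j _ _ [t [Hi Hj]]; apply: val_inj => /=.
suff [h1 h2] : w N i < w N j.+1 /\ w N j < w N i.+1.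
  by move: h1 h2; rewrite !w_lt //; lia.
have wi := w_ge0 N i; have wj := w_ge0 N j.
case: Hi => -[] /=; rewrite in_itv /= => /andP[a1 a2] _;
case: Hj => -[] /=; rewrite in_itv /= => /andP[b1 b2] _; split; lra.
Qed.

Lemma Esub N : \big[setU/set0]_(j < N) E N j `<=` Aset.
Proof.
move=> t; rewrite -bigcup_mkord => -[j _ [[]|[]]]; rewrite /= in_itv /= => /andP[h1 h2] HZ i hi;
  have := HZ i hi; lra.
Qed.

Lemma main_bound n : (H 0 - fine (P Aset)) * (2 * n.+1%:R) <= H 0.
Proof.
set N := n.+1.
have N0 : (0 < N)%N by [].
have hU : (P (\big[setU/set0]_(j < N) E N j) <= P Aset)%E.
  apply: le_measure; rewrite ?inE.
  - by apply: bigsetU_measurable => j _; exact: mE.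
  - exact: mAset.
  - exact: Esub.
have hsum : P (\big[setU/set0]_(j < N) E N j) = (\sum_(j < N) P (E N j))%E.
  apply: measure_semi_additive_ord.
  - by move=> j; exact: mE.
  - exact: Etriv.
  - by apply: bigsetU_measurable => j _; exact: mE.
move: hU; rewrite hsum (eq_bigr (fun j : 'I_N => ((2 * N%:R)^-1 * (H (w N j) + H (- w N j.+1)))%:E)); last first.
  by move=> j _; rewrite PE.
set pa := fine (P Aset).
have hPA : P Aset = pa%:E by exact: PfinE _ mAset.
rewrite sumEFin -mulr_sumr hPA lee_fin => hU.
set S := \sum_(i < N) _ in hU.
have hS : H 0 + (2 * H 0) * n%:R <= S.
  rewrite /S big_split /= big_ord_recl big_ord_recr /=.
  have -> : w N 0 = 0 by rewrite /w mul0r.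
  have h0 := H_ge0 (- w N n.+1).
  have hs : (2 * H 0) * n%:R <= \sum_(i < n) (H (w N (bump 0 i)) + H (- w N (i.+1))).
    have -> : 2 * H 0 * n%:R = \sum_(j < n) (2 * H 0) by rewrite sumr_const card_ord mulr_natr.
    apply: ler_sum => j _; apply: H_pair; exact: w_ge0.
  rewrite big_split /= in hs; lra.
have hN : 0 < 2 * N%:R :> R by rewrite mulr_gt0 ?ltr0n.
have hinv : (2 * N%:R) * (2 * N%:R)^-1 = 1 :> R by rewrite mulfV // gt_eqF.
have hU' : S <= (2 * N%:R) * pa.
  have := ler_wpM2l (ltW hN) hU; rewrite mulrA hinv mul1r //.
rewrite /N -natr1 in hS hU' hN *.
have := H_ge0 0; nra.
Qed.

Lemma final : (P (Zle 0) <= P Aset)%E.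
Proof.
have -> : P (Zle 0) = (H 0)%:E.
  have := Ev_indep setT 0 measurableT; rewrite /Ev preimage_setT setTI => ->.
  by rewrite probability_setT mul1e prodP.
rewrite (PfinE _ mAset) lee_fin leNgt; apply/negP => hlt.
set e := H 0 - fine (P Aset).
have e0 : 0 < e by rewrite /e subr_gt0.
have [M hM] : exists M : nat, e^-1 < M%:R.
  by exists (Num.bound e^-1); apply: archi_boundP; rewrite invr_ge0 ltW.
have hMe : 1 < M%:R * e.
  by rewrite -(ltr_pM2r e0) mulVf ?gt_eqF // in hM.
have := main_bound M; rewrite -/e => hb.
have := H0_le1; rewrite -natr1 in hb; nra.
Qed.
End Main.

Theorem lemma26 (R : realType) (d : measure_display) (T : measurableType d)
  (P : probability T R) (k : nat) (m : nat -> nat) (Z : nat -> T -> R) (X : T -> R) :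
  (2 <= k)%N ->
  (forall i, (2 <= i <= k)%N -> (0 < m i)%N) ->
  measurable_fun setT X ->
  (forall i, (2 <= i <= k)%N -> measurable_fun setT (Z i)) ->
  has_law P X (@unifD R) ->
  (forall i, (2 <= i <= k)%N -> has_law P (Z i) (@Dsum R (m i))) ->
  mutually_independent P (iota 1 k) (fun i => if i == 1%N then X else Z i) ->
  (P [set t | forall i, (2 <= i <= k)%N -> (Z i t <= 0)%R]
   <= P [set t | forall i, (2 <= i <= k)%N -> (Z i t <= X t)%R])%E.
Proof.
move=> hk hm mX mZ lawX lawZ ind.
exact: (@final R d T P k m Z X hk mX mZ ind hm lawZ lawX).
Qed.
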